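(* Consider the problem $\min_{x\in\mathbb{R}^p} F(x):=f(x)+g(x)$, where: (i) $f:\mathbb{R}^p\to\mathbb{R}$ is $L$-smooth ($\|\nabla f(x)-\nabla f(y)\|\le L\|x-y\|$ for all $x,y$) and $g:\mathbb{R}^p\to\mathbb{R}\cup\{\infty\}$ is proper, lower semicontinuous and directionally differentiable; (ii) $F$ is bounded below; (iii) $g$ is prox-bounded, i.e. $g+\frac{\eta}{2}\|\cdot\|^2$ is bounded below for some $\eta>0$. Let $\{(x_t,\eta_t):t\ge0\}$ be generated by the following algorithm (GIST), run indefinitely: fix $\rho>1$, $0<\underline\eta<\overline\eta$, $\sigma\in(0,1)$ and an integer $r\ge1$, and start from $x_0\in\operatorname{dom}F$. At iteration $t$, choose $\hat\eta_t\in[\underline\eta,\overline\eta]$; for $l=0,1,2,\dots$ set $\eta_t=\rho^l\hat\eta_t$ and compute $x_{t+1}\in\operatorname{Prox}_{g/\eta_t}\big(x_t-\frac1{\eta_t}\nabla f(x_t)\big)$, stopping at the first $l$ for which $$F(x_{t+1})\le \max\{F(x_{t-r+1}),\dots,F(x_t)\}-\frac{\sigma\eta_t}{2}\|x_{t+1}-x_t\|^2$$ (where only indices $\ge 0$ are used in the maximum). If the generated sequence $\{x_t\}$ is bounded and $F$ is continuous on a compact set containing the sequence, then any accumulation point of $\{x_t\}$ is a d-stationary point of $F$.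
   Context: $\|\cdot\|$ is the Euclidean norm. $\operatorname{Prox}_{g/\eta}(y):=\operatorname{argmin}_{x\in\mathbb{R}^p}\{\tfrac1\eta g(x)+\tfrac12\|x-y\|^2\}$. The directional derivative is $F'(x;d):=\lim_{\tau\to+0}\frac{F(x+\tau d)-F(x)}{\tau}$ (possibly $+\infty$). A point $x^*$ is a d(irectional)-stationary point of $F$ if $F$ is directionally differentiable at $x^*$ (i.e. $F'(x^*;d)$ exists for all $d$) and $F'(x^*;d)\ge0$ for all $d\in\mathbb{R}^p$. *)

(* Defs.v *)
From HB Require Import structures.
From mathcomp Require Import all_boot all_order all_algebra.
From mathcomp Require Import all_classical all_reals all_analysis.
Set Implicit Arguments. Unset Strict Implicit. Unset Printing Implicit Defensive.
Import Order.TTheory GRing.Theory Num.Theory.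
Import numFieldNormedType.Exports.
Local Open Scope classical_set_scope.
Local Open Scope ring_scope.

Section GIST.
Variables (R : realType) (p : nat).
Notation V := 'rV[R]_p.

Definition dotv (u v : V) : R := \sum_(i < p) u ord0 i * v ord0 i.
Definition enorm (u : V) : R := Num.sqrt (dotv u u).

Definition is_gradient (f : V -> R) (gradf : V -> V) : Prop :=
  forall x, differentiable f x /\ forall v, 'd f x v = dotv (gradf x) v.

Definition L_smooth (L : R) (gradf : V -> V) : Prop :=
  forall x y, enorm (gradf x - gradf y) <= L * enorm (x - y).

Definition proper_fun (g : V -> \bar R) : Prop :=
  (forall x, g x != -oo%E) /\ exists x, (g x < +oo)%E.

Definition diff_quot (F : V -> \bar R) (x d : V) (tau : R) : \bar R :=
  ((F (x + tau *: d)%R - F x) * (tau^-1)%:E)%E.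

Definition has_dir_deriv (F : V -> \bar R) (x d : V) (l : \bar R) : Prop :=
  diff_quot F x d tau @[tau --> 0^'+] --> l.

Definition dir_differentiable_at (F : V -> \bar R) (x : V) : Prop :=
  F x \is a fin_num /\ forall d, exists l, has_dir_deriv F x d l.

Definition d_stationary (F : V -> \bar R) (x : V) : Prop :=
  dir_differentiable_at F x /\
  forall d l, has_dir_deriv F x d l -> (0 <= l)%E.

Definition is_prox (g : V -> \bar R) (eta : R) (y z : V) : Prop :=
  forall x, ((eta^-1)%:E * g z + (2^-1 * enorm (z - y) ^+ 2)%:E
             <= (eta^-1)%:E * g x + (2^-1 * enorm (x - y) ^+ 2)%:E)%E.

Definition Fmax_window (F : V -> \bar R) (x : nat -> V) (r t : nat) : \bar R :=
  \big[Order.max/-oo%E]_(i < r | (i <= t)%N) F (x (t - i)%N).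

Definition accept (F : V -> \bar R) (x : nat -> V) (r : nat) (sigma : R)
    (t : nat) (eta : R) (z : V) : Prop :=
  (F z <= Fmax_window F x r t - (sigma * eta / 2 * enorm (z - x t) ^+ 2)%:E)%E.

(* {(x_t, eta_t)} is generated by GIST with parameters rho, eta_lo, eta_hi,
   sigma, r: hat eta_t, l_t are the chosen initial step and number of
   backtracking steps; each rejected trial l < l_t produced some prox point
   failing the test, and trial l_t produced x_{t+1} passing it. *)
Definition GIST_sequence (f : V -> R) (gradf : V -> V) (g : V -> \bar R)
    (rho eta_lo eta_hi sigma : R) (r : nat)
    (x : nat -> V) (eta : nat -> R) : Prop :=
  let F := fun y => ((f y)%:E + g y)%E in
  (F (x 0%N) < +oo)%E /\
  exists (heta : nat -> R) (l : nat -> nat),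
  forall t,
    [/\ eta_lo <= heta t <= eta_hi,
        eta t = rho ^+ l t * heta t,
        (forall l', (l' < l t)%N ->
           exists z, is_prox g (rho ^+ l' * heta t)
                       (x t - (rho ^+ l' * heta t)^-1 *: gradf (x t)) z /\
                     ~ accept F x r sigma t (rho ^+ l' * heta t) z),
        is_prox g (eta t) (x t - (eta t)^-1 *: gradf (x t)) (x t.+1)
      & accept F x r sigma t (eta t) (x t.+1)].

Definition accumulation_point (x : nat -> V) (xs : V) : Prop :=
  forall eps : R, 0 < eps -> forall N, exists2 t, (N <= t)%N & enorm (x t - xs) < eps.

End GIST.

(* Main.v *)
Require Import Defs.
From HB Require Import structures.
From mathcomp Require Import all_boot all_order all_algebra.
From mathcomp Require Import all_classical all_reals all_analysis.
From mathcomp Require Import ring lra zify.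
Import Order.TTheory GRing.Theory Num.Theory.
Import numFieldNormedType.Exports.
Local Open Scope classical_set_scope.
Local Open Scope ring_scope.
Set Implicit Arguments. Unset Strict Implicit. Unset Printing Implicit Defensive.

Section Vec.
Variables (R : realType) (p : nat).
Local Notation V := 'rV[R]_p.
Implicit Types u v w : V.

Lemma dotvC u v : dotv u v = dotv v u.
Proof. by apply: eq_bigr => i _; rewrite mulrC. Qed.

Lemma dotvDl u w v : dotv (u + w) v = dotv u v + dotv w v.
Proof. by rewrite /dotv -big_split; apply: eq_bigr => i _; rewrite mxE mulrDl. Qed.

Lemma dotvZl a u v : dotv (a *: u) v = a * dotv u v.
Proof. by rewrite /dotv mulr_sumr; apply: eq_bigr => i _; rewrite mxE mulrA. Qed.

Lemma dotvNl u v : dotv (- u) v = - dotv u v.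
Proof. by rewrite -scaleN1r dotvZl mulN1r. Qed.

Lemma dotvBl u w v : dotv (u - w) v = dotv u v - dotv w v.
Proof. by rewrite dotvDl dotvNl. Qed.

Lemma dotvDr u w v : dotv v (u + w) = dotv v u + dotv v w.
Proof. by rewrite dotvC dotvDl !(dotvC v). Qed.

Lemma dotvZr a u v : dotv v (a *: u) = a * dotv v u.
Proof. by rewrite dotvC dotvZl dotvC. Qed.

Lemma dotvNr u v : dotv v (- u) = - dotv v u.
Proof. by rewrite dotvC dotvNl dotvC. Qed.

Lemma dotvBr u w v : dotv v (u - w) = dotv v u - dotv v w.
Proof. by rewrite dotvDr dotvNr. Qed.

Lemma dotv0l v : dotv 0 v = 0.
Proof. by rewrite -(scale0r 0) dotvZl mul0r. Qed.

Lemma dotv_ge0 u : 0 <= dotv u u.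
Proof. by apply: sumr_ge0 => i _; rewrite -expr2 sqr_ge0. Qed.

Lemma enorm_ge0 u : 0 <= enorm u.
Proof. exact: sqrtr_ge0. Qed.

Lemma enorm_sq u : enorm u ^+ 2 = dotv u u.
Proof. by rewrite sqr_sqrtr // dotv_ge0. Qed.

Lemma coord_le u i : `|u ord0 i| <= enorm u.
Proof.
rewrite -sqrtr_sqr /enorm ler_wsqrtr // /dotv (bigD1 i) //= -expr2 lerDl.
by apply: sumr_ge0 => j _; rewrite -expr2 sqr_ge0.
Qed.

Lemma enorm0_eq u : dotv u u = 0 -> u = 0.
Proof.
move=> h; apply/rowP => i; rewrite mxE; apply/eqP; rewrite -normr_le0.
by apply: le_trans (coord_le u i) _; rewrite /enorm h sqrtr0.
Qed.

Lemma CS2 u v : dotv u v ^+ 2 <= dotv u u * dotv v v.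
Proof.
have [A0|Apos] := eqVneq (dotv u u) 0.
  by rewrite (enorm0_eq A0) !dotv0l expr0n mul0r.
have Ag : 0 < dotv u u by rewrite lt_def Apos dotv_ge0.
set A := dotv u u in Ag Apos *; set B := dotv v v; set C := dotv u v.
have := dotv_ge0 (A *: v - C *: u).
rewrite dotvBl !dotvBr !dotvZl !dotvZr -/A -/B -/C (dotvC v u) -/C => h.
have : 0 <= A * (A * B - C ^+ 2).
  by apply: le_trans h _; rewrite le_eqVlt; apply/orP; left; apply/eqP; ring.
by rewrite (pmulr_rge0 _ Ag) subr_ge0.
Qed.

Lemma CS u v : `|dotv u v| <= enorm u * enorm v.
Proof.
by rewrite -sqrtr_sqr /enorm -sqrtrM ?dotv_ge0 // ler_wsqrtr // CS2.
Qed.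

Lemma CS' u v : dotv u v <= enorm u * enorm v.
Proof. exact: le_trans (ler_norm _) (CS u v). Qed.

Lemma enorm_triangle u v : enorm (u + v) <= enorm u + enorm v.
Proof.
rewrite -[X in _ <= X]ger0_norm ?addr_ge0 ?enorm_ge0 // -sqrtr_sqr /enorm.
rewrite ler_wsqrtr // sqrrD !sqr_sqrtr ?dotv_ge0 // dotvDl !dotvDr (dotvC v u).
have := CS' u v; rewrite /enorm => h; lra.
Qed.

Lemma enormN u : enorm (- u) = enorm u.
Proof. by rewrite /enorm dotvNl dotvNr opprK. Qed.

Lemma enormB u v : enorm (u - v) = enorm (v - u).
Proof. by rewrite -enormN opprB. Qed.

Lemma enormZ a u : enorm (a *: u) = `|a| * enorm u.
Proof.
by rewrite /enorm dotvZl dotvZr mulrA -expr2 sqrtrM ?sqr_ge0 // sqrtr_sqr.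
Qed.

Lemma enorm_ball (x y : V) e : enorm (y - x) < e -> ball x e y.
Proof.
move=> h; split; first exact: le_lt_trans (enorm_ge0 _) h.
move=> i j; rewrite /ball /= (ord1 i) -normrN opprB.
by apply: le_lt_trans h; have := coord_le (y - x) j; rewrite !mxE.
Qed.

End Vec.


Section Descent.
Variables (R : realType) (p : nat).
Local Notation V := 'rV[R]_p.

Lemma comp_derive (f : V -> R) (gradf : V -> V) (w v : V) (s : R) :
  is_gradient f gradf ->
  is_derive s 1 (fun s : R => f (w + s *: v)) (dotv (gradf (w + s *: v)) v).
Proof.
move=> hg; set y := w + s *: v.
have E : (fun h : R => h^-1 *: (((fun s : R => f (w + s *: v)) \o shift s) (h *: 1)
            - f (w + s *: v))) =
         (fun h : R => h^-1 *: ((f \o shift y) (h *: v) - f y)).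
  apply: funext => h /=; congr (_ *: (f _ - _)).
  by rewrite /y scalerDl addrCA; congr (_ *: _ + _); exact: mulr1.
have [hd hv] := hg y.
split.
  by rewrite /derivable E; exact: diff_derivable.
by rewrite /derive E -/(derive f y v) deriveE.
Qed.

Lemma descent (f : V -> R) (gradf : V -> V) (L : R) (w z : V) :
  is_gradient f gradf -> L_smooth L gradf ->
  f z <= f w + dotv (gradf w) (z - w) + `|L| * enorm (z - w) ^+ 2.
Proof.
move=> hg hL; set v := z - w; set c := dotv (gradf w) v.
pose h := (fun s : R => f (w + s *: v) - s * c) : R -> R.
pose dh := fun s : R => dotv (gradf (w + s *: v)) v - c.
have hd : forall s : R, is_derive s (1 : R) h (dh s).
  move=> s.
  have H2 : is_derive s (1 : R) (fun s : R => s * c) c.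
    have := is_deriveM (is_derive_id s (1 : R)) (is_derive_cst c s 1).
    move=> H; apply: is_derive_eq H _.
    by rewrite /= scaler0 add0r /cst scaler1.
  exact: (is_deriveB (comp_derive w v s hg) H2).
have hc : {within `[0, 1], continuous h}.
  apply: continuous_subspaceT => s.
  apply: differentiable_continuous; apply/derivable1_diffP.
  by have [] := hd s.
have [t /andP[t0 t1] ht] := MVT ltr01 (fun s _ => hd s) hc.
move: ht; rewrite /h /dh /= subr0 mulr1 scale1r scale0r addr0 mul0r subr0 mul1r.
have wv : w + v = z by rewrite /v addrC subrK.
rewrite wv => ht.
have -> : f z = f w + c + (dotv (gradf (w + t *: v)) v - c).
  by rewrite -ht; ring.
rewrite lerD2l -dotvBl.
apply: le_trans (CS' _ _) _.
rewrite expr2 mulrA ler_wpM2r ?enorm_ge0 //.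
apply: le_trans (hL _ _) _.
rewrite addrAC subrr add0r enormZ.
apply: le_trans (ler_norm _) _; rewrite normrM ler_wpM2l //.
rewrite bnd_simp in t0 t1.
rewrite normrM normr_id (ger0_norm (enorm_ge0 _)) (ger0_norm (ltW t0)).
by rewrite -[X in _ <= X]mul1r ler_wpM2r ?enorm_ge0 // ltW.
Qed.

End Descent.


Section Prox.
Variables (R : realType) (p : nat).
Local Notation V := 'rV[R]_p.

Lemma sq_expand (u D : V) c :
  enorm (u + c *: D) ^+ 2 = enorm u ^+ 2 + 2 * c * dotv D u + c ^+ 2 * dotv D D.
Proof. by rewrite !enorm_sq dotvDl !dotvDr !dotvZl !dotvZr (dotvC u D); ring. Qed.

Lemma prox_ineq (g : V -> \bar R) (eta : R) (w D y z : V) :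
  0 < eta -> (forall x, g x != -oo%E) ->
  is_prox g eta (w - eta^-1 *: D) z -> g y \is a fin_num ->
  g z \is a fin_num /\
  fine (g z) + dotv D (z - w) + eta / 2 * enorm (z - w) ^+ 2 <=
  fine (g y) + dotv D (y - w) + eta / 2 * enorm (y - w) ^+ 2.
Proof.
move=> e0 hneg hp hy; have := hp y.
have ey : g y = (fine (g y))%:E by rewrite fineK.
rewrite ey; set gy := fine (g y).
case E: (g z) => [gz| |]; last by have := hneg z; rewrite E.
  2: by rewrite mulry gtr0_sg ?invr_gt0 // mul1e.
rewrite -!EFinM -!EFinD lee_fin /= => h; split => //.
have e1 : forall u, u - (w - eta^-1 *: D) = (u - w) + eta^-1 *: D.
  by move=> u; rewrite opprB addrA addrAC.
move: h; rewrite !e1 !sq_expand => h.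
set a := eta^-1 in h.
set U := enorm (z - w) ^+ 2 in h *; set U' := enorm (y - w) ^+ 2 in h *.
set P := dotv D (z - w) in h *; set P' := dotv D (y - w) in h *.
set Q := dotv D D in h.
have h2 := ler_wpM2l (ltW e0) h.
have -> : gz + P + eta / 2 * U = eta * (a * gz + 2^-1 * (U + 2 * a * P + a ^+ 2 * Q)) - a * Q / 2.
  rewrite /a; field; by rewrite gt_eqF.
have -> : gy + P' + eta / 2 * U' = eta * (a * gy + 2^-1 * (U' + 2 * a * P' + a ^+ 2 * Q)) - a * Q / 2.
  rewrite /a; field; by rewrite gt_eqF.
by rewrite lerD2r.
Qed.

End Prox.


Section SeqPart.
Variables (R : realType) (phi Phi d : nat -> R) (r : nat) (c m : R).
Hypotheses (r1 : (1 <= r)%N) (c0 : 0 < c) (Phim : forall t, m <= Phi t)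
  (W1 : forall t s, (s <= t)%N -> (t < s + r)%N -> phi s <= Phi t)
  (W2 : forall t, exists s, [/\ (s <= t)%N, (t < s + r)%N & Phi t = phi s])
  (Acc : forall t, phi t.+1 + c * d t ^+ 2 <= Phi t)
  (d0 : forall t, 0 <= d t)
  (UC : forall e, 0 < e -> exists2 del, 0 < del &
          forall a, d a < del -> `|phi a.+1 - phi a| < e).

Lemma Phi_noninc t : Phi t.+1 <= Phi t.
Proof.
have [s [h1 h2 ->]] := W2 t.+1.
have [->|ne] := eqVneq s t.+1.
  apply: le_trans (Acc t); rewrite lerDl; apply: mulr_ge0; [exact: ltW|exact: sqr_ge0].
apply: W1; lia.
Qed.

Lemma Phi_mono s t : (s <= t)%N -> Phi t <= Phi s.
Proof.
move=> /subnK <-; elim: (t - s)%N => [|k IH]; first by rewrite add0n.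
by apply: le_trans IH; rewrite addSn; exact: Phi_noninc.
Qed.

Let S := range Phi.
Let Fs := inf S.

Lemma S_lb : has_lbound S.
Proof. by exists m => _ [t _ <-]; exact: Phim. Qed.

Lemma Fs_le t : Fs <= Phi t.
Proof. by apply: (ge_inf S_lb); exists t. Qed.

Lemma Fs_tail e : 0 < e -> exists N, forall t, (N <= t)%N -> Phi t < Fs + e.
Proof.
move=> e0; have [|_ [N _ <-] hN] := @inf_adherent _ S _ e0.
  by split; [exists (Phi 0), 0%N | exact: S_lb].
by exists N => t hNt; apply: le_lt_trans hN; exact: Phi_mono.
Qed.

Lemma Dd e : 0 < e -> exists2 e1, 0 < e1 &
  forall a, Fs - e1 < phi a.+1 -> Phi a < Fs + e1 -> d a < e.
Proof.
move=> e0; exists (c * e ^+ 2 / 2).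
  by rewrite divr_gt0 // mulr_gt0 // exprn_gt0.
move=> a h1 h2; have := Acc a => h3.
have : c * d a ^+ 2 < c * e ^+ 2 by lra.
rewrite ltr_pM2l // ltr_pXn2r //; by rewrite nnegrE ?(ltW e0).
Qed.

Lemma s_ex : {s : nat -> nat | forall t, [/\ (s t <= t)%N, (t < s t + r)%N & Phi t = phi (s t)]}.
Proof. by have [s hs] := choice W2; exists s. Qed.

Local Notation s := (sval s_ex).
Local Notation hs := (svalP s_ex).

Lemma Qn n : forall e, 0 < e -> exists N, forall t, (N <= t)%N ->
  forall k, (k <= n)%N -> (k < s t)%N /\ Fs - e < phi (s t - k).
Proof.
elim: n => [|n IH] e e0.
  exists r => t hrt k; rewrite leqn0 => /eqP ->; have [h1 h2 h3] := hs t.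
  split; first lia.
  by rewrite subn0 -h3; apply: lt_le_trans (Fs_le t); rewrite ltrBlDr ltrDl.
have e20 : 0 < e / 2 by rewrite divr_gt0.
have [del del0 hdel] := UC e20.
have [e1 e10 he1] := Dd del0.
have mpos : 0 < Num.min (e / 2) e1 by rewrite lt_min e20 e10.
have [N1 hN1] := IH (Num.min (e / 2) e1) mpos.
have [N2 hN2] := Fs_tail e10.
exists (maxn N1 (N2 + n + r + 2)) => t ht k hk.
have [ht1 ht2] : (N1 <= t)%N /\ (N2 + n + r + 2 <= t)%N by lia.
have hmin1 : Num.min (e / 2) e1 <= e / 2 by rewrite ge_min lexx.
have hmin2 : Num.min (e / 2) e1 <= e1 by rewrite ge_min lexx orbT.
have [ke|kne] := eqVneq k n.+1; last first.
  have [a1 a2] := hN1 t ht1 k (ltac:(lia)); split => //; lra.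
rewrite ke.
have [a1 a2] := hN1 t ht1 n (leqnn n).
have [h1 h2 h3] := hs t.
split; first lia.
set a := (s t - n.+1)%N.
have ea : (s t - n)%N = a.+1 by rewrite /a; lia.
rewrite ea in a2.
have hda : d a < del.
  apply: he1; first lra.
  apply: hN2; rewrite /a; lia.
have := hdel a hda; rewrite ltr_norml => /andP[b1 b2]; lra.
Qed.

Lemma d_to0 e : 0 < e -> exists N, forall u, (N <= u)%N -> d u < e.
Proof.
move=> e0; have [e1 e10 he1] := Dd e0.
have [N1 hN1] := Qn (r.-1) e10.
have [N2 hN2] := Fs_tail e10.
exists (maxn N1 N2) => u hu.
have [h1 h2 h3] := hs (u + r)%N.
have [a1 a2] := hN1 (u + r)%N (ltac:(lia)) (s (u + r) - u.+1)%N (ltac:(lia)).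
have eu : (s (u + r) - (s (u + r) - u.+1))%N = u.+1 by lia.
rewrite eu in a2.
apply: he1 => //; apply: hN2; lia.
Qed.

End SeqPart.


Section Main.
Variables (R : realType) (p : nat)
  (f : 'rV[R]_p -> R) (gradf : 'rV[R]_p -> 'rV[R]_p) (L : R)
  (g : 'rV[R]_p -> \bar R)
  (rho eta_lo eta_hi sigma : R) (r : nat)
  (x : nat -> 'rV[R]_p) (eta : nat -> R).
Local Notation V := 'rV[R]_p.
Hypotheses (hgrad : is_gradient f gradf) (hL : L_smooth L gradf)
  (hprop : proper_fun g) (hlsc : lower_semicontinuous g)
  (hdd : forall y, (g y < +oo)%E -> dir_differentiable_at g y)
  (hbb : exists m : R, forall y, (m%:E <= (f y)%:E + g y)%E)
  (rho1 : 1 < rho) (elo0 : 0 < eta_lo) (elohi : eta_lo < eta_hi)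
  (hsig : 0 < sigma < 1) (r1 : (1 <= r)%N)
  (hgist : GIST_sequence f gradf g rho eta_lo eta_hi sigma r x eta)
  (hK : exists K : set 'rV[R]_p, compact K /\ (forall t, K (x t)) /\
      {within K, continuous (fun y => ((f y)%:E + g y)%E)}).

Local Notation F := (fun y => ((f y)%:E + g y)%E).

Lemma gneg y : g y != -oo%E.
Proof. by have [h _] := hprop. Qed.

Lemma Ffin_g y : (F y \is a fin_num) = (g y \is a fin_num).
Proof.
by case: (g y) (gneg y).
Qed.

Lemma Fneg y : F y != -oo%E.
Proof. by case E: (g y) (gneg y). Qed.

Lemma sig0 : 0 < sigma. Proof. by case/andP: hsig. Qed.
Lemma sig1 : sigma < 1. Proof. by case/andP: hsig. Qed.

Lemma gist_parts : (F (x 0%N) < +oo)%E /\ exists (heta : nat -> R) (l : nat -> nat),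
  forall t,
    [/\ eta_lo <= heta t <= eta_hi,
        eta t = rho ^+ l t * heta t,
        (forall l', (l' < l t)%N ->
           exists z, is_prox g (rho ^+ l' * heta t)
                       (x t - (rho ^+ l' * heta t)^-1 *: gradf (x t)) z /\
                     ~ accept F x r sigma t (rho ^+ l' * heta t) z),
        is_prox g (eta t) (x t - (eta t)^-1 *: gradf (x t)) (x t.+1)
      & accept F x r sigma t (eta t) (x t.+1)].
Proof. exact: hgist. Qed.

Lemma rhoX_ge1 k : 1 <= rho ^+ k.
Proof. by rewrite exprn_ege1 // ltW. Qed.

Lemma eta_ge t : eta_lo <= eta t.
Proof.
have [_ [heta [l H]]] := gist_parts; have [/andP[h1 _] -> _ _ _] := H t.
by rewrite -[eta_lo]mul1r ler_pM ?rhoX_ge1 // ltW.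
Qed.

Lemma eta_gt0 t : 0 < eta t.
Proof. exact: lt_le_trans elo0 (eta_ge t). Qed.

Lemma window_ge (t s : nat) : (s <= t)%N -> (t < s + r)%N ->
  (F (x s) <= Fmax_window F x r t)%E.
Proof.
move=> h1 h2; have hi : (t - s < r)%N by lia.
have := @le_bigmax_cond _ _ _ (-oo)%E (Ordinal hi) (fun i : 'I_r => (i <= t)%N)
  (fun i : 'I_r => F (x (t - i)%N)).
rewrite /= subKn //; apply; lia.
Qed.

Lemma window_eq t : exists s, [/\ (s <= t)%N, (t < s + r)%N &
  Fmax_window F x r t = F (x s)].
Proof.
have := @eq_bigmax _ _ _ (-oo)%E (Ordinal r1) (fun i : 'I_r => (i <= t)%N)
  (fun i : 'I_r => F (x (t - i)%N)).
case=> [//| i _ | i hi E]; first exact: leNye.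
exists (t - i)%N; split; [lia | | exact: E].
have := ltn_ord i; move: hi; rewrite unfold_in /=; lia.
Qed.

Lemma Ffin_all t : F (x t) \is a fin_num.
Proof.
elim/ltn_ind: t => t IH.
rewrite fin_numE Fneg /=.
case: t IH => [|t] IH; first by have [h _] := gist_parts; rewrite lt_neqAle in h; case/andP: h.
have [_ [heta [l H]]] := gist_parts; have [_ _ _ _ hacc] := H t.
have [s [s1 s2 E]] := window_eq t.
move: hacc; rewrite /accept E.
have := IH s (ltac:(lia)); rewrite fin_numE => /andP[_ /eqP hs] hacc.
apply/eqP => hinf; move: hacc; rewrite hinf.
by case: (F (x s)) hs.
Qed.

Definition phi t := fine (F (x t)).
Definition Phi t := fine (Fmax_window F x r t).
Definition dd t := enorm (x t.+1 - x t).

Lemma FxE t : F (x t) = (phi t)%:E.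
Proof. by rewrite fineK ?Ffin_all. Qed.

Lemma FmaxE t : Fmax_window F x r t = (Phi t)%:E.
Proof.
have [s [_ _ E]] := window_eq t.
by rewrite /Phi E fineK ?Ffin_all.
Qed.

Lemma W1' t s : (s <= t)%N -> (t < s + r)%N -> phi s <= Phi t.
Proof. by move=> h1 h2; have := window_ge h1 h2; rewrite FxE FmaxE lee_fin. Qed.

Lemma W2' t : exists s, [/\ (s <= t)%N, (t < s + r)%N & Phi t = phi s].
Proof.
have [s [h1 h2 E]] := window_eq t; exists s; split => //.
by rewrite /Phi E.
Qed.

Lemma phi_le_Phi t : phi t <= Phi t.
Proof. by apply: W1'; lia. Qed.

Lemma Acc' t : phi t.+1 + (sigma * eta_lo / 2) * dd t ^+ 2 <= Phi t.
Proof.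
have [_ [heta [l H]]] := gist_parts; have [_ _ _ _ hacc] := H t.
move: hacc; rewrite /accept FxE FmaxE -EFinB lee_fin -/(dd t) => h.
have : sigma * eta_lo / 2 * dd t ^+ 2 <= sigma * eta t / 2 * dd t ^+ 2.
  rewrite ler_wpM2r ?sqr_ge0 // ler_wpM2r // ler_wpM2l ?eta_ge //.
  exact: ltW sig0.
lra.
Qed.

Lemma Phim : exists m, forall t, m <= Phi t.
Proof.
have [m hm] := hbb; exists m => t; apply: le_trans (phi_le_Phi t).
by have := hm (x t); rewrite FxE lee_fin.
Qed.

Lemma gxE t : g (x t) = (phi t - f (x t))%:E.
Proof.
have := FxE t; case: (g (x t)) => [a| |] //= [<-]; congr (_%:E); ring.
Qed.

Lemma suff_decrease t (et : R) (z : V) : 0 < et -> 2 * `|L| <= et * (1 - sigma) ->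
  is_prox g et (x t - et^-1 *: gradf (x t)) z -> accept F x r sigma t et z.
Proof.
move=> et0 hbig hp.
have gfin : g (x t) \is a fin_num by rewrite -Ffin_g Ffin_all.
have [gzf h] := prox_ineq et0 gneg hp gfin.
move: h; rewrite subrr (dotvC _ 0) dotv0l [enorm 0 ^+ 2]enorm_sq dotv0l mulr0 !addr0 gxE /= => h.
have hd := descent (x t) z hgrad hL.
rewrite /accept FmaxE -(fineK gzf) -EFinD -EFinB lee_fin.
have := phi_le_Phi t.
set P := dotv (gradf (x t)) (z - x t) in h hd.
set U := enorm (z - x t) ^+ 2 in h hd *.
have U0 : 0 <= U by exact: sqr_ge0.
have : sigma * et / 2 * U <= (et / 2 - `|L|) * U.
  rewrite ler_wpM2r //; lra.
lra.
Qed.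

Definition Emax := Num.max eta_hi (rho * (2 * `|L| / (1 - sigma))).

Lemma eta_le t : eta t <= Emax.
Proof.
have [_ [heta [l H]]] := gist_parts; have [/andP[h1 h2] -> hrej _ _] := H t.
case E: (l t) => [|k].
  by rewrite expr0 mul1r le_max h2.
have [z [hp hna]] := hrej k (ltac:(lia)).
have hpos : 0 < rho ^+ k * heta t.
  by rewrite mulr_gt0 // ?exprn_gt0 ?(lt_trans ltr01 rho1) // (lt_le_trans elo0 h1).
have hlt : rho ^+ k * heta t * (1 - sigma) < 2 * `|L|.
  rewrite ltNge; apply/negP => hge; apply: hna; exact: suff_decrease hpos hge hp.
have s1 : 0 < 1 - sigma by have := sig1; lra.
rewrite le_max; apply/orP; right.
rewrite exprS -mulrA ler_wpM2l ?(ltW (lt_trans ltr01 rho1)) //.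
by rewrite ler_pdivlMr // ltW.
Qed.

Lemma Emax_gt0 : 0 < Emax.
Proof. exact: lt_le_trans (eta_gt0 0) (eta_le 0). Qed.

Lemma phi_le0 t : phi t <= phi 0.
Proof.
apply: le_trans (phi_le_Phi t) _.
have -> : phi 0 = Phi 0.
  have [s [h1 h2 ->]] := W2' 0; by have -> : s = 0%N by lia.
have c0 : 0 < sigma * eta_lo / 2 by rewrite divr_gt0 // mulr_gt0 // sig0.
exact: (Phi_mono r1 c0 W1' W2' Acc').
Qed.

Lemma UC_gen e : 0 < e -> exists2 del, 0 < del &
  forall a b, enorm (x a - x b) < del -> `|phi a - phi b| < e.
Proof.
move=> e0.
case: (pselect (exists2 del, 0 < del &
  forall a b, enorm (x a - x b) < del -> `|phi a - phi b| < e)) => // nH.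
have H : forall n : nat, exists ab : nat * nat,
    enorm (x ab.1 - x ab.2) < n.+1%:R^-1 /\ e <= `|phi ab.1 - phi ab.2|.
  move=> n; apply: contrapT => hn; apply: nH; exists n.+1%:R^-1 => // a b hab.
  rewrite ltNge; apply/negP => hle; apply: hn; by exists (a, b).
have [ab hab] := choice H.
pose y := fun n => x (ab n).2.
have [K [cK [Kx cF]]] := hK.
have FK : (fmap y eventually) K by exists 0%N => // n _; exact: Kx.
have [z [Kz clz]] := cK _ _ FK.
have cFz : F @ within K (nbhs z) --> F z.
  have := cF z; by rewrite /continuous_at nbhs_subspace_in.
have hpos : forall N : nat, 0 < N.+1%:R^-1 :> R by move=> N; rewrite invr_gt0.
have hdec : forall N n : nat, (N <= n)%N -> n.+1%:R^-1 <= N.+1%:R^-1 :> R.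
  move=> N n hNn; rewrite lef_pV2 ?posrE // ler_nat; lia.
case Ez: (F z) => [w | | ]; last by have := Fneg z; rewrite Ez.
- move: cFz; rewrite Ez => /fine_cvgP [_ hfc].
  have e20 : 0 < e / 2 by rewrite divr_gt0.
  have H1 := (cvgrPdist_lt _ _).1 hfc (e / 2) e20.
  have /nbhs_ballP [rh /= rh0 hb] :
    nbhs z [set v | K v -> `|w - fine (F v)| < e / 2] by apply: H1.
  have rh20 : 0 < rh / 2 by rewrite divr_gt0.
  have [N _ hN] := near_infty_natSinv_lt (PosNum rh20).
  have [v [[n hn ->] hv]] := clz [set v | exists2 n, (N <= n)%N & v = y n]
    (ball z (rh / 2)) (ltac:(by exists N => // n hn; exists n)) (nbhsx_ballx z (rh / 2) rh20).
  have [h1 h2] := hab n.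
  have hxa : ball (y n) (rh / 2) (x (ab n).1).
    apply: enorm_ball; apply: lt_le_trans h1 _.
    by apply: le_trans (hdec _ _ hn) _; apply: ltW; apply: hN => /=.
  have ha := hb _ (ltac:(by rewrite (splitr rh); exact: ball_triangle hv hxa)) (Kx _).
  have hrh : rh / 2 <= rh by lra.
  have hb2 := hb _ (le_ball hrh hv) (Kx _).
  rewrite /y -/(phi _) in hb2; rewrite -/(phi _) in ha.
  move: ha hb2 h2; rewrite !ltr_norml => /andP[? ?] /andP[? ?].
  set u := phi _ - phi _; have : `|u| < e / 2 + e / 2.
    by rewrite ltr_norml /u; apply/andP; split; lra.
  move=> hu hle; have := le_lt_trans hle hu; lra.
- move: cFz; rewrite Ez => cFz.
  have H1 := cFz _ (ereal_nbhs_pinfty_gt (num_real (phi 0))).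
  have /nbhs_ballP [rh /= rh0 hb] :
    nbhs z [set v | K v -> ((phi 0)%:E < F v)%E] by apply: H1.
  have [v [[n ->] hv]] := clz [set v | exists n, v = y n]
    (ball z rh) (ltac:(by exists 0%N => // n _; exists n)) (nbhsx_ballx z rh rh0).
  have := hb _ hv (Kx _); rewrite /y FxE lte_fin.
  by rewrite ltNge phi_le0.
Qed.

Lemma dd_to0 e : 0 < e -> exists N, forall u, (N <= u)%N -> dd u < e.
Proof.
have [m hm] := Phim.
have c0 : 0 < sigma * eta_lo / 2 by rewrite divr_gt0 // mulr_gt0 // sig0.
apply: (d_to0 r1 c0 hm W1' W2' Acc' (fun t => enorm_ge0 _)).
move=> e0 he0; have [del del0 hdel] := UC_gen he0.
by exists del => // a ha; apply: hdel.
Qed.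

Lemma step_prox t : is_prox g (eta t) (x t - (eta t)^-1 *: gradf (x t)) (x t.+1).
Proof. by have [_ [heta [l H]]] := gist_parts; have [] := H t. Qed.

Variable xs : V.
Hypothesis hacc : accumulation_point x xs.

Lemma gxs_lt : (g xs < +oo)%E.
Proof.
rewrite ltey; apply/eqP => E.
have hh : ((phi 0 - f xs + 1)%:E < g xs)%E by rewrite E ltry.
have [V1 hV1 hgt] := hlsc hh.
have fc := differentiable_continuous (hgrad xs).1.
have H2 := (cvgrPdist_lt _ _).1 fc 1 ltr01.
have /nbhs_ballP [rh /= rh0 hb] :
  nbhs xs (V1 `&` [set v | `|f xs - f v| < 1]) by apply: filterI => //; apply: H2.
have [t _ ht] := hacc rh0 0.
have [h1 h2] := hb _ (enorm_ball ht).
have := hgt _ h1; rewrite gxE lte_fin => h3.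
move: h2; rewrite /= ltr_norml => /andP[h4 h5]; have := phi_le0 t.
lra.
Qed.

Lemma gxs_fin : g xs \is a fin_num.
Proof. by rewrite fin_numE gneg /= -ltey gxs_lt. Qed.

Lemma grad_close (w : V) del : enorm (w - xs) < del ->
  enorm (gradf w - gradf xs) <= `|L| * del.
Proof.
move=> h; apply: le_trans (hL _ _) _.
apply: le_trans (_ : `|L| * enorm (w - xs) <= _).
  by rewrite ler_wpM2r ?enorm_ge0 // ler_norm.
by rewrite ler_wpM2l //; exact: ltW.
Qed.

Lemma limit_ineq_real (y : V) : g y \is a fin_num ->
  fine (g xs) <= fine (g y) + (dotv (gradf xs) (y - xs) + Emax / 2 * enorm (y - xs) ^+ 2).
Proof.
move=> gyf.
set G := fine (g xs); set gy := fine (g y).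
set Gn := enorm (gradf xs); set aL := `|L|; set Y := enorm (y - xs).
set Hh := Emax / 2.
have Gn0 : 0 <= Gn by exact: enorm_ge0.
have aL0 : 0 <= aL by exact: normr_ge0.
have Y0 : 0 <= Y by exact: enorm_ge0.
have Hh0 : 0 <= Hh by rewrite divr_ge0 // ltW // Emax_gt0.
set C0 := Gn + aL + aL * (Y + 1) + Gn + Hh * (2 * Y + 1).
have C00 : 0 <= C0 by rewrite /C0; repeat apply: addr_ge0 => //; apply: mulr_ge0 => //; lra.
apply/ler_addgt0Pr => e0 he0.
set e := e0 / 2.
have e0' : 0 < e by rewrite divr_gt0.
have hh : ((G - e)%:E < g xs)%E by rewrite -(fineK gxs_fin) lte_fin -/G; lra.
have [V1 hV1 hgt] := hlsc hh.
have /nbhs_ballP [rh1 /= rh10 hb1] := hV1.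
set del0 := e / (C0 + 1).
have del00 : 0 < del0 by rewrite divr_gt0 //; lra.
set del := Num.min 1 (Num.min (rh1 / 2) del0).
have del_pos : 0 < del by rewrite !lt_min ltr01 del00 divr_gt0.
have del1 : del <= 1 by rewrite ge_min lexx.
have del2 : del <= rh1 / 2 by rewrite !ge_min lexx orbT.
have del3 : del <= del0 by rewrite !ge_min lexx !orbT.
have [N hN] := dd_to0 del_pos.
have [t ht hwt] := hacc del_pos N.
have hdt := hN t ht.
set w := x t in hwt hdt *; set z := x t.+1 in hdt *.
have hzx : enorm (z - xs) < rh1.
  have -> : z - xs = (z - w) + (w - xs) by rewrite addrA subrK.
  apply: le_lt_trans (enorm_triangle _ _) _; rewrite /dd -/w -/z in hdt; lra.
have := hgt _ (hb1 _ (enorm_ball hzx)).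
have [gzf hpx] := prox_ineq (eta_gt0 t) gneg (step_prox t) gyf.
rewrite -/w -/z in gzf hpx.
rewrite -(fineK gzf) lte_fin => hgz.
set D := gradf w in hpx.
have hDD := grad_close hwt; rewrite -/D in hDD.
have hdz : enorm (z - w) < del by [].
have B1 : - dotv D (z - w) <= (Gn + aL) * del.
  have : `|dotv D (z - w)| <= enorm D * enorm (z - w) by exact: CS.
  have hD : enorm D <= Gn + aL.
    have -> : D = gradf xs + (D - gradf xs) by rewrite addrC subrK.
    apply: le_trans (enorm_triangle _ _) _; rewrite lerD2l; apply: le_trans hDD _.
    by rewrite -[X in _ <= X]mulr1 ler_wpM2l.
  have : enorm D * enorm (z - w) <= (Gn + aL) * del.
    by apply: ler_pM; rewrite ?enorm_ge0 // ltW.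
  rewrite ler_norml => h1 /andP[h2 h3]; lra.
have hyw : enorm (y - w) <= Y + del.
  have -> : y - w = (y - xs) + (xs - w) by rewrite addrA subrK.
  by apply: le_trans (enorm_triangle _ _) _; rewrite lerD2l enormB ltW.
have B2 : dotv (D - gradf xs) (y - w) <= aL * del * (Y + 1).
  apply: le_trans (CS' _ _) _; apply: ler_pM; rewrite ?enorm_ge0 //; lra.
have B3 : dotv (gradf xs) (xs - w) <= Gn * del.
  apply: le_trans (CS' _ _) _; rewrite ler_wpM2l // enormB ltW //.
have idD : dotv D (y - w) = dotv (gradf xs) (y - xs) + dotv (D - gradf xs) (y - w)
    + dotv (gradf xs) (xs - w).
  rewrite !dotvBl !dotvBr; ring.
have B4 : eta t / 2 * enorm (y - w) ^+ 2 <= Hh * Y ^+ 2 + Hh * del * (2 * Y + 1).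
  have h1 : eta t / 2 <= Hh by rewrite /Hh ler_wpM2r ?eta_le.
  have h2 : enorm (y - w) ^+ 2 <= (Y + del) ^+ 2.
    by rewrite ler_pXn2r ?nnegrE ?enorm_ge0 //; lra.
  have h3 : (Y + del) ^+ 2 <= Y ^+ 2 + del * (2 * Y + 1).
    rewrite sqrrD; have : del ^+ 2 <= del.
      by rewrite expr2 -[X in _ <= X]mulr1 ler_wpM2l // ltW.
    lra.
  apply: le_trans (ler_pM _ _ h1 (le_trans h2 h3)) _.
  - by rewrite divr_ge0 // ltW // eta_gt0.
  - exact: sqr_ge0.
  - by rewrite le_eqVlt; apply/orP; left; apply/eqP; ring.
have B5 : 0 <= eta t / 2 * enorm (z - w) ^+ 2.
  by rewrite mulr_ge0 ?sqr_ge0 // divr_ge0 // ltW // eta_gt0.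
have hC : del * C0 <= e.
  apply: le_trans (_ : del0 * (C0 + 1) <= e).
    apply: ler_pM => //; [exact: ltW | lra].
  by rewrite /del0 divfK //; apply: lt0r_neq0; lra.
have hsum : (Gn + aL) * del + aL * del * (Y + 1) + Gn * del + Hh * del * (2 * Y + 1)
    = del * C0 by rewrite /C0; ring.
rewrite idD in hpx.
rewrite /e in hgz hC.
rewrite -/gy in hpx. lra.
Qed.

Lemma fquot_cvg (d : V) :
  (fun tau : R => (f (xs + tau *: d) - f xs) * tau^-1) @ 0^'+ --> dotv (gradf xs) d.
Proof.
have [hdiff hval] := hgrad xs.
have hder : derivable f xs d := diff_derivable hdiff.
have hc : (fun h : R => h^-1 *: ((f \o shift xs) (h *: d) - f xs)) @ 0^' --> 'D_d f xs := hder.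
rewrite deriveE // hval in hc.
have E : (fun h : R => h^-1 *: ((f \o shift xs) (h *: d) - f xs)) =
         (fun tau : R => (f (xs + tau *: d) - f xs) * tau^-1).
  by apply: funext => h /=; rewrite [h *: d + xs]addrC; exact: mulrC.
rewrite -E; exact: cvg_dnbhs_at_right hc.
Qed.

Lemma F_quot_eq (d : V) (tau : R) : 0 < tau ->
  diff_quot F xs d tau =
  (((f (xs + tau *: d) - f xs) * tau^-1)%:E + diff_quot g xs d tau)%E.
Proof.
move=> t0; rewrite /diff_quot -(fineK gxs_fin).
set G := fine (g xs).
case E: (g (xs + tau *: d)) => [c| |].
- by rewrite -!EFinD -EFinM; congr (_%:E); ring.
- have ti : 0 < tau^-1 by rewrite invr_gt0.
  by rewrite /= !mulyr !gtr0_sg // !mul1e.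
- by have := gneg (xs + tau *: d); rewrite E.
Qed.

Lemma F_dir (d : V) (lg : \bar R) : has_dir_deriv g xs d lg ->
  has_dir_deriv F xs d ((dotv (gradf xs) d)%:E + lg)%E.
Proof.
move=> hg; rewrite /has_dir_deriv.
have hf : (fun tau : R => ((f (xs + tau *: d) - f xs) * tau^-1)%:E) @ 0^'+
    --> (dotv (gradf xs) d)%:E.
  by apply/fine_cvgP; split; [exact: nearW | exact: fquot_cvg].
have hdef : ((dotv (gradf xs) d)%:E +? lg)%E by apply: fin_num_adde_defr.
have := cvgeD hdef hf hg.
move=> H.
have HH : \forall tau \near 0^'+,
    (((f (xs + tau *: d) - f xs) * tau^-1)%:E + diff_quot g xs d tau)%E =
    diff_quot F xs d tau.
  near=> tau; rewrite F_quot_eq //; near: tau; exact: nbhs_right_gt.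
have FF : Filter (0 : R)^'+ by exact: _.
have T1 := H FF. have T2 := near_eq_cvg (FF := FF) HH. exact: (cvg_trans T2 T1).
Unshelve. all: end_near.
Qed.

Lemma lg_lb (d : V) (lg : \bar R) : has_dir_deriv g xs d lg ->
  ((- dotv (gradf xs) d)%:E <= lg)%E.
Proof.
move=> hg; set D0 := dotv (gradf xs) d.
apply/lee_addgt0Pr => e e0.
suff : ((- D0 - e)%:E <= lg)%E.
  case: lg {hg} => [c| |] //=; rewrite ?lee_fin => h.
  - lra.
  - by rewrite addye // leey.
have FF : ProperFilter (0 : R)^'+ by exact: at_right_proper_filter.
set Hh := Emax / 2; set nd := enorm d ^+ 2.
have Hh0 : 0 <= Hh by rewrite divr_ge0 // ltW // Emax_gt0.
have nd0 : 0 <= nd by exact: sqr_ge0.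
have dl0 : 0 < e / (Hh * nd + 1).
  by rewrite divr_gt0 // ltr_wpDl // mulr_ge0.
suff Hnear : \forall tau \near 0^'+, ((- D0 - e)%:E <= diff_quot g xs d tau)%E.
  have HC := (@closed_cvg _ _ _ FF _ [set v | ((- D0 - e)%:E <= v)%E] (@closed_ereal_le_ereal R ((- D0 - e)%:E)) Hnear lg hg). exact: HC.
near=> tau.
have t0 : 0 < tau by near: tau; exact: nbhs_right_gt.
have t1 : tau < e / (Hh * nd + 1) by near: tau; exact: nbhs_right_lt.
rewrite /diff_quot -(fineK gxs_fin); set G := fine (g xs).
case E: (g (xs + tau *: d)) => [c| |].
- have hfin : g (xs + tau *: d) \is a fin_num by rewrite E.
  have := limit_ineq_real hfin; rewrite E /=.
  have -> : xs + tau *: d - xs = tau *: d by rewrite addrC addKr.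
  rewrite dotvZr enormZ (gtr0_norm t0) -/D0 -/G exprMn -/nd => h.
  rewrite -EFinD -EFinM lee_fin.
  rewrite (ler_pdivlMr _ _ t0).
  have ht2 : tau * (Hh * nd + 1) < e by rewrite -ltr_pdivlMr // ltr_wpDl // mulr_ge0.
  have : Hh * (tau ^+ 2 * nd) <= tau * e.
    have -> : Hh * (tau ^+ 2 * nd) = tau * (tau * (Hh * nd)) by rewrite expr2; ring.
    have t0w : 0 <= tau by rewrite le_eqVlt t0 orbT.
    rewrite ler_wpM2l //.
    apply: ltW; apply: le_lt_trans ht2.
    by rewrite ler_wpM2l ?lerDl.
  move=> h3; rewrite mulrBl mulNr. rewrite -/Hh in h; lra.
- have ti : 0 < tau^-1 by rewrite invr_gt0.
  by rewrite /= mulyr gtr0_sg // mul1e leey.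
- by have := gneg (xs + tau *: d); rewrite E.
Unshelve. all: end_near.
Qed.

Lemma xs_dstat : d_stationary F xs.
Proof.
have [_ hd] := hdd gxs_lt.
split.
  split; first by rewrite Ffin_g gxs_fin.
  move=> d; have [lg hlg] := hd d.
  by exists ((dotv (gradf xs) d)%:E + lg)%E; exact: F_dir.
move=> d l hl.
have [lg hlg] := hd d.
have FF : ProperFilter (0 : R)^'+ by exact: at_right_proper_filter.
have E : l = ((dotv (gradf xs) d)%:E + lg)%E.
  have E1 := cvg_lim (@ereal_hausdorff R) hl.
  have E2 := cvg_lim (@ereal_hausdorff R) (F_dir hlg).
  by rewrite -E1 -E2.
rewrite E; have := lg_lb hlg.
case: lg {hlg E} => [c| |] //=; rewrite ?lee_fin => h.
- lra.
- by rewrite addey // leey.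
Qed.

End Main.


Unset Implicit Arguments.

Theorem theorem1 (R : realType) (p : nat)
  (f : 'rV[R]_p -> R) (gradf : 'rV[R]_p -> 'rV[R]_p) (L : R)
  (g : 'rV[R]_p -> \bar R)
  (rho eta_lo eta_hi sigma : R) (r : nat)
  (x : nat -> 'rV[R]_p) (eta : nat -> R) :
  is_gradient f gradf ->
  L_smooth L gradf ->
  proper_fun g ->
  lower_semicontinuous g ->
  (forall y, (g y < +oo)%E -> dir_differentiable_at g y) ->
  (exists m : R, forall y, (m%:E <= (f y)%:E + g y)%E) ->
  (exists e : R, 0 < e /\ exists m : R,
      forall y, (m%:E <= g y + (e / 2 * enorm y ^+ 2)%:E)%E) ->
  1 < rho -> 0 < eta_lo -> eta_lo < eta_hi -> 0 < sigma < 1 -> (1 <= r)%N ->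
  GIST_sequence f gradf g rho eta_lo eta_hi sigma r x eta ->
  (exists M : R, forall t, enorm (x t) <= M) ->
  (exists K : set 'rV[R]_p, compact K /\ (forall t, K (x t)) /\
      {within K, continuous (fun y => ((f y)%:E + g y)%E)}) ->
  forall xs, accumulation_point x xs ->
    d_stationary (fun y => ((f y)%:E + g y)%E) xs.
Proof.
move=> hgrad hL hprop hlsc hdd hbb _ rho1 elo0 elohi hsig r1 hgist _ hK xs hacc.
by eapply xs_dstat; eassumption.
Qed.
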